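(* Let $\|\cdot\|$ be a $C^2$ and strictly convex norm on $\mathbb{R}^2$. Then for every $\varepsilon>0$ there exists $R>0$ such that for all points $a,b\in\mathbb{R}^2$ with $a\neq b$ and $\|b-a\|=1$, $$\sup\{\mathrm{dist}(z,L(a,b)) : z\in M(a,b)\setminus B(a,R)\}\leq\varepsilon,$$ where $\mathrm{dist}$ is the Euclidean distance and $B(a,R)$ the Euclidean open ball of center $a$ and radius $R$.
   Context: The norm is called $C^2$ and strictly convex if $x\mapsto\|x\|$ is $C^2$ on $\mathbb{R}^2\setminus\{0\}$ and the unit sphere $\partial B_{\|\cdot\|}(0,1)=\{\|x\|=1\}$ is a $C^2$ curve with strictly positive curvature (equivalently $D^2\|x\|(h,h)>0$ for $x\ne0$, $h$ not parallel to $x$). For $a,b\in\mathbb{R}^2$ the curve bisector is $M(a,b)=\{z\in\mathbb{R}^2:\|a-z\|=\|b-z\|\}$. For $x$ with $\|x\|=1$, there are exactly two points $y_1,y_2$ (with $y_2=-y_1$) on the unit sphere at which the tangent line to the unit sphere is directed by $x$; $L_x$ denotes the line through $y_1$ and $y_2$ (a line through the origin). For $x\neq0$ with $\|x\|\neq1$, $L_x:=L_{x/\|x\|}$. Finally $L(a,b):=\frac{a+b}{2}+L_{b-a}$. *)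

(* Defs.v *)
From Stdlib Require Import Reals.
From Coquelicot Require Import Coquelicot.
Open Scope R_scope.

Definition pt := (R * R)%type.

Definition padd (p q : pt) : pt := (fst p + fst q, snd p + snd q).
Definition psub (p q : pt) : pt := (fst p - fst q, snd p - snd q).
Definition pscal (c : R) (p : pt) : pt := (c * fst p, c * snd p).

Definition is_norm (N : pt -> R) : Prop :=
  (forall x, 0 <= N x) /\
  (forall x, N x = 0 -> x = (0, 0)) /\
  (forall c x, N (pscal c x) = Rabs c * N x) /\
  (forall x y, N (padd x y) <= N x + N y).

Definition D1 (f : pt -> R) (p : pt) : R := Derive (fun t => f (t, snd p)) (fst p).
Definition D2 (f : pt -> R) (p : pt) : R := Derive (fun t => f (fst p, t)) (snd p).

Definition C2_off0 (f : pt -> R) : Prop :=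
  forall p : pt, p <> (0, 0) ->
    (forall g, List.In g (f :: D1 f :: D2 f :: nil) ->
       ex_derive (fun t => g (t, snd p)) (fst p) /\
       ex_derive (fun t => g (fst p, t)) (snd p)) /\
    (forall g, List.In g (f :: D1 f :: D2 f :: D1 (D1 f) :: D2 (D1 f)
                      :: D1 (D2 f) :: D2 (D2 f) :: nil) ->
       continuous g p).

Definition hess_quad (f : pt -> R) (p h : pt) : R :=
  fst h * fst h * D1 (D1 f) p
  + fst h * snd h * (D2 (D1 f) p + D1 (D2 f) p)
  + snd h * snd h * D2 (D2 f) p.

Definition parallel (h x : pt) : Prop := fst h * snd x - snd h * fst x = 0.

Definition C2_strictly_convex_norm (N : pt -> R) : Prop :=
  is_norm N /\ C2_off0 N /\
  forall x h, x <> (0, 0) -> ~ parallel h x -> hess_quad N x h > 0.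

(* the tangent line to the unit sphere at y (N y = 1) is directed by x iff
   x is orthogonal to the gradient of N at y *)
Definition tangent_directed_by (N : pt -> R) (y x : pt) : Prop :=
  N y = 1 /\ D1 N y * fst x + D2 N y * snd x = 0.

(* L_x for ||x|| = 1: the line through the points y of the unit sphere whose
   tangent is directed by x (and through -y); for x <> 0 general,
   L_x := L_{x/||x||}. *)
Definition Ldir (N : pt -> R) (x : pt) : pt -> Prop :=
  fun z => exists y t, tangent_directed_by N y (pscal (/ N x) x) /\ z = pscal t y.

Definition Lab (N : pt -> R) (a b : pt) : pt -> Prop :=
  fun z => Ldir N (psub b a) (psub z (pscal (/2) (padd a b))).

Definition Mab (N : pt -> R) (a b : pt) : pt -> Prop :=
  fun z => N (psub a z) = N (psub b z).

Definition edist (p q : pt) : R :=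
  sqrt ((fst p - fst q) ^ 2 + (snd p - snd q) ^ 2).

Definition dist_set (z : pt) (S : pt -> Prop) : Rbar :=
  Glb_Rbar (fun r => exists p, S p /\ r = edist z p).

Definition eball (a : pt) (R0 : R) : pt -> Prop := fun z => edist a z < R0.

(* Main.v *)
Require Import Defs.
From Stdlib Require Import Reals Lra Psatz.
From Coquelicot Require Import Coquelicot.
Open Scope R_scope.

Lemma between_abs a b c : Rmin a b <= c <= Rmax a b -> Rabs (c - a) <= Rabs (b - a).
Proof.
  unfold Rmin, Rmax; destruct (Rle_dec a b); intros;
  unfold Rabs; repeat destruct Rcase_abs; lra.
Qed.

Lemma cont_of_ex (f : R -> R) x : ex_derive f x -> continuity_pt f x.
Proof. intros H. apply continuity_pt_filterlim. exact (ex_derive_continuous f x H). Qed.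

Lemma abs0_lt (x : R) (d : posreal) : Rabs (x - x) < d.
Proof. replace (x - x) with 0 by ring. rewrite Rabs_R0. apply cond_pos. Qed.

Lemma diff_partials (f : R -> R -> R) x y :
  locally_2d (fun u v => ex_derive (fun z => f z v) u /\ ex_derive (fun z => f u z) v) x y ->
  continuity_2d_pt (fun u v => Derive (fun z => f z v) u) x y ->
  continuity_2d_pt (fun u v => Derive (fun z => f u z) v) x y ->
  differentiable_pt_lim f x y (Derive (fun z => f z y) x) (Derive (fun z => f x z) y).
Proof.
  intros [d0 Hd] H1 H2 eps.
  destruct (H1 (pos_div_2 eps)) as [d1 Hd1].
  destruct (H2 (pos_div_2 eps)) as [d2 Hd2].
  assert (Hdp : 0 < Rmin d0 (Rmin d1 d2)).
  { destruct d0, d1, d2; simpl; repeat apply Rmin_glb_lt; auto. }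
  exists (mkposreal _ Hdp). simpl. intros u v Hu Hv.
  assert (Hu0 : Rabs (u - x) < d0) by (eapply Rlt_le_trans; [exact Hu| apply Rmin_l]).
  assert (Hv0 : Rabs (v - y) < d0) by (eapply Rlt_le_trans; [exact Hv| apply Rmin_l]).
  assert (Hu1 : Rabs (u - x) < d1) by (eapply Rlt_le_trans; [exact Hu| eapply Rle_trans; [apply Rmin_r|apply Rmin_l]]).
  assert (Hv1 : Rabs (v - y) < d1) by (eapply Rlt_le_trans; [exact Hv| eapply Rle_trans; [apply Rmin_r|apply Rmin_l]]).
  assert (Hu2 : Rabs (u - x) < d2) by (eapply Rlt_le_trans; [exact Hu| eapply Rle_trans; [apply Rmin_r|apply Rmin_r]]).
  assert (Hv2 : Rabs (v - y) < d2) by (eapply Rlt_le_trans; [exact Hv| eapply Rle_trans; [apply Rmin_r|apply Rmin_r]]).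
  destruct (MVT_gen (fun z => f z v) x u (fun z => Derive (fun t => f t v) z)) as [c1 [Hc1 E1]].
  { intros z Hz; cbv zeta in Hz. apply Derive_correct. apply (Hd z v); [|exact Hv0].
    apply Rle_lt_trans with (Rabs (u - x)); [apply between_abs; lra| exact Hu0]. }
  { intros z Hz; cbv zeta in Hz. apply cont_of_ex. apply (Hd z v); [|exact Hv0].
    apply Rle_lt_trans with (Rabs (u - x)); [apply between_abs; lra| exact Hu0]. }
  destruct (MVT_gen (fun z => f x z) y v (fun z => Derive (fun t => f x t) z)) as [c2 [Hc2 E2]].
  { intros z Hz; cbv zeta in Hz. apply Derive_correct. apply (Hd x z); [apply abs0_lt|].
    apply Rle_lt_trans with (Rabs (v - y)); [apply between_abs; lra| exact Hv0]. }
  { intros z Hz; cbv zeta in Hz. apply cont_of_ex. apply (Hd x z); [apply abs0_lt|].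
    apply Rle_lt_trans with (Rabs (v - y)); [apply between_abs; lra| exact Hv0]. }
  cbv zeta in Hc1, Hc2; apply between_abs in Hc1; apply between_abs in Hc2.
  assert (A1 := Hd1 c1 v ltac:(lra) Hv1).
  assert (A2 := Hd2 x c2 (abs0_lt x d2) ltac:(lra)).
  simpl in A1, A2.
  replace (f u v - f x y - (Derive (fun z => f z y) x * (u - x) + Derive (fun z => f x z) y * (v - y)))
    with ((Derive (fun t => f t v) c1 - Derive (fun z => f z y) x) * (u - x)
          + (Derive (fun t => f x t) c2 - Derive (fun z => f x z) y) * (v - y)) by lra.
  eapply Rle_trans; [apply Rabs_triang|]. rewrite !Rabs_mult.
  assert (Rabs (u - x) <= Rmax (Rabs (u - x)) (Rabs (v - y))) by apply Rmax_l.
  assert (Rabs (v - y) <= Rmax (Rabs (u - x)) (Rabs (v - y))) by apply Rmax_r.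
  assert (0 <= Rabs (u-x)) by apply Rabs_pos. assert (0 <= Rabs (v-y)) by apply Rabs_pos.
  set (M := Rmax (Rabs (u - x)) (Rabs (v - y))) in *.
  set (A := Rabs (Derive (fun t => f t v) c1 - Derive (fun z => f z y) x)) in *.
  set (B := Rabs (Derive (fun t => f x t) c2 - Derive (fun z => f x z) y)) in *.
  assert (0 <= A) by apply Rabs_pos. assert (0 <= B) by apply Rabs_pos.
  assert (A * Rabs (u - x) <= eps / 2 * M) by (apply Rmult_le_compat; lra).
  assert (B * Rabs (v - y) <= eps / 2 * M) by (apply Rmult_le_compat; lra).
  lra.
Qed.

Lemma is_derive_Rminus (f g : R -> R) x a b :
  is_derive f x a -> is_derive g x b -> is_derive (fun t => f t - g t) x (a - b).
Proof. intros H1 H2. exact (is_derive_minus f g x a b H1 H2). Qed.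

Lemma between_in a b c : -1 <= a <= 1 -> -1 <= b <= 1 -> Rmin a b <= c <= Rmax a b ->
  -1 <= c <= 1 /\ 0 <= (c - a) * (b - a).
Proof.
  unfold Rmin, Rmax; destruct (Rle_dec a b); intros; split; try lra; nra.
Qed.

Lemma conv_min (g dg ddg : R -> R) s0 x :
  (forall s, -1 <= s <= 1 -> is_derive g s (dg s)) ->
  (forall s, -1 <= s <= 1 -> is_derive dg s (ddg s)) ->
  (forall s, -1 <= s <= 1 -> 0 <= ddg s) ->
  -1 <= s0 <= 1 -> -1 <= x <= 1 -> dg s0 = 0 -> g s0 <= g x.
Proof.
  intros Hg Hdg Hpos Hs0 Hx H0.
  destruct (MVT_gen g s0 x dg) as [c [Hc E]].
  { intros z Hz; cbv zeta in Hz. apply Hg. apply (between_in s0 x z); auto; lra. }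
  { intros z Hz; cbv zeta in Hz. apply cont_of_ex. eexists. apply Hg. apply (between_in s0 x z); auto. }
  cbv zeta in Hc. destruct (between_in s0 x c Hs0 Hx Hc) as [Hc1 Hc2].
  destruct (MVT_gen dg s0 c ddg) as [c' [Hc' E']].
  { intros z Hz; cbv zeta in Hz. apply Hdg. apply (between_in s0 c z); auto; lra. }
  { intros z Hz; cbv zeta in Hz. apply cont_of_ex. eexists. apply Hdg. apply (between_in s0 c z); auto. }
  cbv zeta in Hc'. destruct (between_in s0 c c' Hs0 Hc1 Hc') as [Hc'1 Hc'2].
  rewrite H0 in E'. assert (dg c = ddg c' * (c - s0)) by lra.
  assert (0 <= ddg c') by auto.
  assert (g x - g s0 = ddg c' * ((c - s0) * (x - s0))) by (rewrite E, H; ring).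
  assert (0 <= ddg c' * ((c - s0) * (x - s0))) by (apply Rmult_le_pos; lra).
  lra.
Qed.

Lemma key1d (phi df ddf : R -> R) s0 k eta :
  (forall s, -1 <= s <= 1 -> is_derive phi s (df s)) ->
  (forall s, -1 <= s <= 1 -> is_derive df s (ddf s)) ->
  -1 <= s0 <= 1 -> df s0 = 0 -> phi 1 = phi (-1) -> 0 < k -> 0 <= eta <= 1 ->
  (forall s, -1 <= s <= 1 -> k * (1 - eta) <= ddf s <= k * (1 + eta)) ->
  Rabs s0 <= eta.
Proof.
  intros Hp Hd Hs0 Hdf0 Hsym Hk Heta Hb.
  assert (L : forall x, -1 <= x <= 1 -> k * (1 - eta) * (x - s0)^2 / 2 <= phi x - phi s0).
  { intros x Hx.
    assert (H := conv_min (fun s => phi s - k * (1 - eta) * (s - s0)^2 / 2)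
              (fun s => df s - k * (1 - eta) * (s - s0))
              (fun s => ddf s - k * (1 - eta) * 1) s0 x).
    cbv beta in H. replace ((s0 - s0)^2) with 0 in H by ring.
    assert (phi s0 - k * (1 - eta) * 0 / 2 <= phi x - k * (1 - eta) * (x - s0) ^ 2 / 2); [|lra].
    apply H; auto.
    - intros s Hs. apply is_derive_Rminus; auto.
      auto_derive; auto; field.
    - intros s Hs. apply is_derive_Rminus; auto.
      auto_derive; auto; field.
    - intros s Hs. specialize (Hb s Hs). lra.
    - rewrite Hdf0; ring. }
  assert (U : forall x, -1 <= x <= 1 -> phi x - phi s0 <= k * (1 + eta) * (x - s0)^2 / 2).
  { intros x Hx.
    assert (H := conv_min (fun s => k * (1 + eta) * (s - s0)^2 / 2 - phi s)
              (fun s => k * (1 + eta) * (s - s0) - df s)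
              (fun s => k * (1 + eta) * 1 - ddf s) s0 x).
    cbv beta in H. replace ((s0 - s0)^2) with 0 in H by ring.
    assert (k * (1 + eta) * 0 / 2 - phi s0 <= k * (1 + eta) * (x - s0) ^ 2 / 2 - phi x); [|lra].
    apply H; auto.
    - intros s Hs. apply is_derive_Rminus; auto.
      auto_derive; auto; field.
    - intros s Hs. apply is_derive_Rminus; auto.
      auto_derive; auto; field.
    - intros s Hs. specialize (Hb s Hs). lra.
    - rewrite Hdf0; ring. }
  assert (A1 := L 1 ltac:(lra)). assert (A2 := L (-1) ltac:(lra)).
  assert (B1 := U 1 ltac:(lra)). assert (B2 := U (-1) ltac:(lra)).
  rewrite Hsym in A1, B1.
  assert (C1 : (1 - eta) * (-1 - s0)^2 <= (1 + eta) * (1 - s0)^2).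
  { apply (Rmult_le_reg_l (k / 2)); [lra|]. nra. }
  assert (C2 : (1 - eta) * (1 - s0)^2 <= (1 + eta) * (-1 - s0)^2).
  { apply (Rmult_le_reg_l (k / 2)); [lra|]. nra. }
  apply Rabs_le. split; nra.
Qed.

Lemma chart (F : R -> R -> R) :
  (forall l a b, 0 < l -> 0 < a -> F (l * a) (l * b) = F a b / l ^ 3) ->
  (forall t, -2 <= t <= 2 -> continuity_pt (F 1) t) ->
  (forall t, -2 <= t <= 2 -> 0 < F 1 t) ->
  forall eta, 0 < eta -> exists del, 0 < del /\
    forall t a b, -1 <= t <= 1 -> Rabs (a - 1) <= del -> Rabs (b - t) <= del ->
      Rabs (F a b - F 1 t) <= eta * F 1 t.
Proof.
  intros Hom Hc Hp eta Heta.
  destruct (continuity_ab_min (F 1) (-2) 2 ltac:(lra) Hc) as [mx [Hmx Hmxi]].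
  set (m := F 1 mx). assert (Hm : 0 < m) by (apply Hp; lra).
  assert (He : 0 < eta * m / 4) by (apply Rmult_lt_0_compat; [apply Rmult_lt_0_compat|]; lra).
  destruct (Heine_cor2 Hc (mkposreal _ He)) as [du Hdu]. simpl in Hdu.
  assert (Hdu0 := cond_pos du).
  set (del := Rmin (Rmin (1/8) (eta/24)) (du/4)).
  assert (D1 : del <= 1/8) by (unfold del; eapply Rle_trans; [apply Rmin_l|apply Rmin_l]).
  assert (D2 : del <= eta/24) by (unfold del; eapply Rle_trans; [apply Rmin_l|apply Rmin_r]).
  assert (D3 : del <= du/4) by (unfold del; apply Rmin_r).
  assert (D0 : 0 < del) by (unfold del; repeat apply Rmin_glb_lt; lra).
  exists del. split; [exact D0|].
  intros t a b Ht Ha Hb.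
  apply Rabs_le_between in Ha. apply Rabs_le_between in Hb.
  assert (Hapos : 0 < a) by lra.
  set (t' := b / a).
  assert (Eab : F a b = F 1 t' / a ^ 3).
  { rewrite <- (Hom a 1 t') by lra. f_equal; [ring| unfold t'; field; lra]. }
  assert (Ht'1 : Rabs (t' - t) <= 3 * del).
  { unfold t'. replace (b / a - t) with ((b - t + t * (1 - a)) / a) by (field; lra).
    rewrite Rabs_div by lra. rewrite (Rabs_right a) by lra.
    apply Rmult_le_reg_r with a; [lra|]. unfold Rdiv. rewrite Rmult_assoc, Rinv_l, Rmult_1_r by lra.
    eapply Rle_trans; [apply Rabs_triang|]. rewrite Rabs_mult.
    assert (Rabs (b - t) <= del) by (apply Rabs_le; lra).
    assert (Rabs t <= 1) by (apply Rabs_le; lra).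
    assert (Rabs (1 - a) <= del) by (apply Rabs_le; lra).
    assert (0 <= Rabs t) by apply Rabs_pos. assert (0 <= Rabs (1-a)) by apply Rabs_pos.
    nra. }
  apply Rabs_le_between in Ht'1.
  assert (Hcl : Rabs (F 1 t' - F 1 t) < eta * m / 4).
  { apply Hdu; try lra. apply Rabs_def1; lra. }
  assert (HmF : m <= F 1 t) by (apply Hmx; lra).
  assert (HF : 0 < F 1 t) by (apply Hp; lra).
  set (ia := / a ^ 3).
  assert (Ha3 : 343 / 512 <= a ^ 3) by nra.
  assert (Hia : 0 < ia <= 512 / 343).
  { unfold ia. split. apply Rinv_0_lt_compat; nra.
    replace (512 / 343) with (/ (343 / 512)) by field. apply Rinv_le_contravar; lra. }
  assert (Hia1 : Rabs (ia - 1) <= eta / 4).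
  { replace (ia - 1) with (ia * ((1 - a) * (1 + a + a * a))) by (unfold ia; field; lra).
    rewrite Rabs_mult, Rabs_mult. rewrite (Rabs_right ia) by lra.
    rewrite (Rabs_right (1 + a + a * a)) by nra.
    assert (Rabs (1 - a) <= del) by (apply Rabs_le; lra).
    assert (0 <= Rabs (1-a)) by apply Rabs_pos.
    assert (1 + a + a * a <= 7/2) by nra.
    assert (Rabs (1 - a) * (1 + a + a * a) <= del * (7/2)) by (apply Rmult_le_compat; nra).
    assert (ia * (Rabs (1 - a) * (1 + a + a * a)) <= 512/343 * (del * (7/2)))
      by (apply Rmult_le_compat; try nra).
    lra. }
  rewrite Eab. unfold Rdiv. fold ia.
  replace (F 1 t' * ia - F 1 t) with ((F 1 t' - F 1 t) * ia + F 1 t * (ia - 1)) by ring.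
  eapply Rle_trans; [apply Rabs_triang|]. rewrite !Rabs_mult.
  rewrite (Rabs_right ia) by lra. rewrite (Rabs_right (F 1 t)) by lra.
  assert (Rabs (F 1 t' - F 1 t) * ia <= eta * m / 4 * (512/343)) by (apply Rmult_le_compat; try lra; apply Rabs_pos).
  assert (F 1 t * Rabs (ia - 1) <= F 1 t * (eta / 4)) by (apply Rmult_le_compat_l; lra).
  assert (eta * m <= eta * F 1 t) by (apply Rmult_le_compat_l; lra).
  lra.
Qed.

Lemma pair_eq (a b c d : R) : a = c -> b = d -> (a, b) = (c, d).
Proof. intros -> ->; reflexivity. Qed.

Lemma nz_fst (a b : R) : a <> 0 -> (a, b) <> (0, 0).
Proof. intros H E; inversion E; auto. Qed.
Lemma nz_snd (a b : R) : b <> 0 -> (a, b) <> (0, 0).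
Proof. intros H E; inversion E; auto. Qed.

Lemma N_scal N : C2_strictly_convex_norm N -> forall c x, N (pscal c x) = Rabs c * N x.
Proof. intros [[_ [_ [H _]]] _]. exact H. Qed.

Lemma N_pos N : C2_strictly_convex_norm N -> forall x, x <> (0,0) -> 0 < N x.
Proof. intros [[H0 [H1 _]] _] x Hx. destruct (H0 x); auto. exfalso; auto. Qed.

Lemma N_opp N : C2_strictly_convex_norm N -> forall a b, N (-a, -b) = N (a, b).
Proof.
  intros HN a b. replace (-a, -b) with (pscal (-1) (a, b)) by (unfold pscal; simpl; apply pair_eq; ring).
  rewrite (N_scal N HN). rewrite Rabs_left by lra. ring.
Qed.

Lemma ex1 N : C2_strictly_convex_norm N -> forall g p, p <> (0,0) ->
  List.In g (N :: D1 N :: D2 N :: nil) ->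
  ex_derive (fun t => g (t, snd p)) (fst p) /\ ex_derive (fun t => g (fst p, t)) (snd p).
Proof. intros [_ [HC _]] g p Hp Hin. exact (proj1 (HC p Hp) g Hin). Qed.

Lemma cont1 N : C2_strictly_convex_norm N -> forall g p, p <> (0,0) ->
  List.In g (N :: D1 N :: D2 N :: D1 (D1 N) :: D2 (D1 N) :: D1 (D2 N) :: D2 (D2 N) :: nil) ->
  continuous g p.
Proof. intros [_ [HC _]] g p Hp Hin. exact (proj2 (HC p Hp) g Hin). Qed.

Lemma D1_scal (g : pt -> R) l c x : l <> 0 -> (forall p, g (pscal l p) = c * g p) ->
  ex_derive (fun t => g (t, snd x)) (fst x) -> D1 g (pscal l x) = c / l * D1 g x.
Proof.
  intros Hl Hg Hex. unfold D1. destruct x as [x1 x2]. simpl in *.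
  apply is_derive_unique.
  apply is_derive_ext with (fun t => c * g (t / l, x2)).
  { intros t. rewrite <- Hg. f_equal. unfold pscal; simpl. apply pair_eq; field; auto. }
  replace (c / l * Derive (fun t => g (t, x2)) x1) with (c * (/ l * Derive (fun t => g (t, x2)) x1)) by (field; auto).
  apply is_derive_scal.
  apply (is_derive_comp (fun u => g (u, x2)) (fun t => t / l) (l * x1)).
  - replace (l * x1 / l) with x1 by (field; auto). now apply Derive_correct.
  - auto_derive; auto. field; auto.
Qed.

Lemma D2_scal (g : pt -> R) l c x : l <> 0 -> (forall p, g (pscal l p) = c * g p) ->
  ex_derive (fun t => g (fst x, t)) (snd x) -> D2 g (pscal l x) = c / l * D2 g x.
Proof.
  intros Hl Hg Hex. unfold D2. destruct x as [x1 x2]. simpl in *.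
  apply is_derive_unique.
  apply is_derive_ext with (fun t => c * g (x1, t / l)).
  { intros t. rewrite <- Hg. f_equal. unfold pscal; simpl. apply pair_eq; field; auto. }
  replace (c / l * Derive (fun t => g (x1, t)) x2) with (c * (/ l * Derive (fun t => g (x1, t)) x2)) by (field; auto).
  apply is_derive_scal.
  apply (is_derive_comp (fun u => g (x1, u)) (fun t => t / l) (l * x2)).
  - replace (l * x2 / l) with x2 by (field; auto). now apply Derive_correct.
  - auto_derive; auto. field; auto.
Qed.

Lemma pscal0 l : pscal l (0,0) = (0,0).
Proof. unfold pscal; simpl; apply pair_eq; ring. Qed.

Lemma pt_dec (p : pt) : {p = (0,0)} + {p <> (0,0)}.
Proof.
  destruct p as [a b]. destruct (Req_EM_T a 0) as [->|Ha].
  - destruct (Req_EM_T b 0) as [->|Hb]; [left; reflexivity| right; now apply nz_snd].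
  - right; now apply nz_fst.
Qed.

Lemma HD1 N : C2_strictly_convex_norm N -> forall l p, 0 < l -> D1 N (pscal l p) = D1 N p.
Proof.
  intros HN l p Hl. destruct (pt_dec p) as [E|Hp].
  - subst p. now rewrite pscal0.
  - rewrite (D1_scal N l l p); [field; lra| lra | |].
    + intros q. rewrite (N_scal N HN). rewrite Rabs_right by lra. reflexivity.
    + apply (ex1 N HN N p Hp). simpl; auto.
Qed.

Lemma HD2 N : C2_strictly_convex_norm N -> forall l p, 0 < l -> D2 N (pscal l p) = D2 N p.
Proof.
  intros HN l p Hl. destruct (pt_dec p) as [E|Hp].
  - subst p. now rewrite pscal0.
  - rewrite (D2_scal N l l p); [field; lra| lra | |].
    + intros q. rewrite (N_scal N HN). rewrite Rabs_right by lra. reflexivity.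
    + apply (ex1 N HN N p Hp). simpl; auto.
Qed.

Lemma HDD N : C2_strictly_convex_norm N -> forall l p, 0 < l -> p <> (0,0) ->
  D1 (D1 N) (pscal l p) = / l * D1 (D1 N) p /\
  D2 (D1 N) (pscal l p) = / l * D2 (D1 N) p /\
  D1 (D2 N) (pscal l p) = / l * D1 (D2 N) p /\
  D2 (D2 N) (pscal l p) = / l * D2 (D2 N) p.
Proof.
  intros HN l p Hl Hp.
  assert (E1 : forall q, D1 N (pscal l q) = 1 * D1 N q) by (intros; rewrite (HD1 N HN) by lra; ring).
  assert (E2 : forall q, D2 N (pscal l q) = 1 * D2 N q) by (intros; rewrite (HD2 N HN) by lra; ring).
  assert (X1 := ex1 N HN (D1 N) p Hp ltac:(simpl; auto)).
  assert (X2 := ex1 N HN (D2 N) p Hp ltac:(simpl; auto)).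
  repeat split.
  - rewrite (D1_scal _ l 1 p); [field; lra | lra | exact E1 | apply X1].
  - rewrite (D2_scal _ l 1 p); [field; lra | lra | exact E1 | apply X1].
  - rewrite (D1_scal _ l 1 p); [field; lra | lra | exact E2 | apply X2].
  - rewrite (D2_scal _ l 1 p); [field; lra | lra | exact E2 | apply X2].
Qed.

Lemma hess_scal N : C2_strictly_convex_norm N -> forall l p h, 0 < l -> p <> (0,0) ->
  hess_quad N (pscal l p) h = / l * hess_quad N p h.
Proof.
  intros HN l p h Hl Hp. destruct (HDD N HN l p Hl Hp) as [A [B [C D]]].
  unfold hess_quad. rewrite A, B, C, D. ring.
Qed.

Definition Kf N (p : pt) := hess_quad N p (- snd p, fst p).
Definition Gf N (p : pt) := Kf N p / (fst p ^ 2 + snd p ^ 2) ^ 2.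

Lemma Gf_scal N : C2_strictly_convex_norm N -> forall l p, 0 < l -> p <> (0,0) ->
  Gf N (pscal l p) = Gf N p / l ^ 3.
Proof.
  intros HN l p Hl Hp. unfold Gf, Kf.
  replace (- snd (pscal l p), fst (pscal l p)) with (pscal l (- snd p, fst p))
    by (unfold pscal; simpl; apply pair_eq; ring).
  rewrite (hess_scal N HN l p _ Hl Hp).
  assert (0 < fst p ^ 2 + snd p ^ 2).
  { destruct p as [a b]; simpl.
    destruct (Req_dec a 0); [destruct (Req_dec b 0)|].
    - subst; exfalso; auto.
    - nra.
    - nra. }
  assert (0 < l * fst p * (l * fst p) + l * snd p * (l * snd p)).
  { replace (l * fst p * (l * fst p) + l * snd p * (l * snd p)) with ((l * l) * (fst p ^ 2 + snd p ^ 2)) by ring.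
    apply Rmult_lt_0_compat; nra. }
  unfold hess_quad, pscal; simpl. field. repeat split; try lra; nra.
Qed.

Lemma cont2d_of_cont (g : pt -> R) x y : continuous g (x,y) -> continuity_2d_pt (fun u v => g (u,v)) x y.
Proof.
  intros H. apply continuity_2d_pt_filterlim.
  eapply filterlim_ext; [|exact H]. intros [a b]; reflexivity.
Qed.

Lemma loc_nz x y : (x, y) <> (0,0) -> exists d : posreal, forall u v,
  Rabs (u - x) < d -> Rabs (v - y) < d -> (u, v) <> (0,0).
Proof.
  intros Hp.
  assert (Hd : 0 < Rmax (Rabs x) (Rabs y)).
  { destruct (Req_dec x 0); [destruct (Req_dec y 0)|].
    - subst; exfalso; auto.
    - eapply Rlt_le_trans; [|apply Rmax_r]. now apply Rabs_pos_lt.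
    - eapply Rlt_le_trans; [|apply Rmax_l]. now apply Rabs_pos_lt. }
  exists (mkposreal _ Hd). simpl. intros u v Hu Hv E. inversion E; subst.
  rewrite Rminus_0_l, Rabs_Ropp in Hu, Hv.
  unfold Rmax in Hu, Hv. destruct Rle_dec; lra.
Qed.

Lemma diffN N : C2_strictly_convex_norm N -> forall g x y, (x, y) <> (0,0) ->
  List.In g (N :: D1 N :: D2 N :: nil) ->
  differentiable_pt_lim (fun u v => g (u,v)) x y (D1 g (x,y)) (D2 g (x,y)).
Proof.
  intros HN g x y Hp Hin.
  assert (Hin2 : List.In (D1 g) (N :: D1 N :: D2 N :: D1 (D1 N) :: D2 (D1 N) :: D1 (D2 N) :: D2 (D2 N) :: nil) /\
                 List.In (D2 g) (N :: D1 N :: D2 N :: D1 (D1 N) :: D2 (D1 N) :: D1 (D2 N) :: D2 (D2 N) :: nil)).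
  { destruct Hin as [<-|[<-|[<-|[]]]]; simpl; split; auto 10. }
  apply (diff_partials (fun u v => g (u,v)) x y).
  - destruct (loc_nz x y Hp) as [d Hd]. exists d. intros u v Hu Hv.
    exact (ex1 N HN g (u,v) (Hd u v Hu Hv) Hin).
  - exact (cont2d_of_cont (D1 g) x y (cont1 N HN (D1 g) (x,y) Hp (proj1 Hin2))).
  - exact (cont2d_of_cont (D2 g) x y (cont1 N HN (D2 g) (x,y) Hp (proj2 Hin2))).
Qed.

Lemma chain N : C2_strictly_convex_norm N -> forall g w1 w2 d1 d2 s,
  (w1 + s * d1, w2 + s * d2) <> (0,0) -> List.In g (N :: D1 N :: D2 N :: nil) ->
  is_derive (fun s => g (w1 + s * d1, w2 + s * d2)) s
    (D1 g (w1 + s * d1, w2 + s * d2) * d1 + D2 g (w1 + s * d1, w2 + s * d2) * d2).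
Proof.
  intros HN g w1 w2 d1 d2 s Hp Hin.
  apply is_derive_Reals.
  apply (derivable_pt_lim_comp_2d (fun u v => g (u,v)) (fun s => w1 + s * d1) (fun s => w2 + s * d2)).
  - exact (diffN N HN g _ _ Hp Hin).
  - apply is_derive_Reals. auto_derive; auto; ring.
  - apply is_derive_Reals. auto_derive; auto; ring.
Qed.

Lemma is_derive_Rplus (f g : R -> R) x a b :
  is_derive f x a -> is_derive g x b -> is_derive (fun t => f t + g t) x (a + b).
Proof. intros H1 H2. exact (is_derive_plus f g x a b H1 H2). Qed.

Lemma is_derive_mulr (f : R -> R) x a c :
  is_derive f x a -> is_derive (fun t => f t * c) x (a * c).
Proof.
  intros H. apply is_derive_ext with (fun t => c * f t); [intros t; apply Rmult_comm|].
  replace (a * c) with (c * a) by ring. now apply is_derive_scal.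
Qed.

Lemma phi_d1 N : C2_strictly_convex_norm N -> forall w1 w2 d1 d2 s,
  (w1 + s * d1, w2 + s * d2) <> (0,0) ->
  is_derive (fun s => N (w1 + s * d1, w2 + s * d2)) s
    (D1 N (w1 + s * d1, w2 + s * d2) * d1 + D2 N (w1 + s * d1, w2 + s * d2) * d2).
Proof. intros HN w1 w2 d1 d2 s Hp. apply (chain N HN N); simpl; auto. Qed.

Lemma phi_d2 N : C2_strictly_convex_norm N -> forall w1 w2 d1 d2 s,
  (w1 + s * d1, w2 + s * d2) <> (0,0) ->
  is_derive (fun s => D1 N (w1 + s * d1, w2 + s * d2) * d1 + D2 N (w1 + s * d1, w2 + s * d2) * d2) s
    (hess_quad N (w1 + s * d1, w2 + s * d2) (d1, d2)).
Proof.
  intros HN w1 w2 d1 d2 s Hp.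
  assert (A := chain N HN (D1 N) w1 w2 d1 d2 s Hp ltac:(simpl; auto)).
  assert (B := chain N HN (D2 N) w1 w2 d1 d2 s Hp ltac:(simpl; auto)).
  assert (C := is_derive_Rplus _ _ s _ _ (is_derive_mulr _ s _ d1 A) (is_derive_mulr _ s _ d2 B)).
  match type of C with is_derive _ _ ?v => replace (hess_quad N (w1 + s * d1, w2 + s * d2) (d1, d2)) with v by (unfold hess_quad; simpl; ring) end.
  exact C.
Qed.

Lemma hess_pp N : C2_strictly_convex_norm N -> forall p, p <> (0,0) -> hess_quad N p p = 0.
Proof.
  intros HN [p1 p2] Hp.
  assert (Hnz : forall s, -1 < s -> (p1 + s * p1, p2 + s * p2) <> (0,0)).
  { intros s Hs E. inversion E. apply Hp. apply pair_eq; nra. }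
  assert (H0 := phi_d2 N HN p1 p2 p1 p2 0 (Hnz 0 ltac:(lra))).
  replace (p1 + 0 * p1, p2 + 0 * p2) with (p1, p2) in H0 by (apply pair_eq; ring).
  assert (Hc : is_derive (fun s => D1 N (p1 + s * p1, p2 + s * p2) * p1 + D2 N (p1 + s * p1, p2 + s * p2) * p2) 0 0).
  { apply is_derive_ext_loc with (fun _ => D1 N (p1, p2) * p1 + D2 N (p1, p2) * p2).
    - apply (locally_interval _ 0 (-1) p_infty); simpl; try lra; auto.
      intros y Hy _.
      replace (p1 + y * p1, p2 + y * p2) with (pscal (1 + y) (p1, p2)) by (unfold pscal; simpl; apply pair_eq; ring).
      rewrite (HD1 N HN), (HD2 N HN) by lra. reflexivity.
    - auto_derive; auto. }
  apply is_derive_unique in H0. apply is_derive_unique in Hc. congruence.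
Qed.

Lemma quad_lin a b : (forall t, 0 <= a * t ^ 2 + b * t) -> b = 0.
Proof.
  intros H. set (k := Rabs a + 1).
  assert (Hk : 0 < k) by (unfold k; assert (0 <= Rabs a) by apply Rabs_pos; lra).
  assert (Hak : a <= k) by (unfold k; assert (a <= Rabs a) by apply RRle_abs; lra).
  set (t := - b / (2 * k)).
  specialize (H t).
  assert (a * t ^ 2 <= k * t ^ 2) by (apply Rmult_le_compat_r; [nra|lra]).
  assert (k * t ^ 2 + b * t = - (b ^ 2) / (4 * k)) by (unfold t; field; lra).
  assert (0 <= - (b ^ 2) / (4 * k)) by lra.
  assert (b ^ 2 / (4 * k) <= 0) by (unfold Rdiv in *; lra).
  assert (0 <= b ^ 2 / (4 * k)) by (apply Rdiv_le_0_compat; nra).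
  assert (b ^ 2 = 0).
  { assert (b ^ 2 / (4 * k) = 0) by lra.
    apply (Rmult_eq_reg_r (/ (4 * k))); [|apply Rinv_neq_0_compat; lra].
    unfold Rdiv in *; lra. }
  nra.
Qed.

Lemma psd2 A B C p1 p2 :
  (forall h1 h2, 0 <= h1 * h1 * A + h1 * h2 * B + h2 * h2 * C) ->
  p1 * p1 * A + p1 * p2 * B + p2 * p2 * C = 0 -> (p1, p2) <> (0,0) ->
  forall h1 h2, (h1 * h1 * A + h1 * h2 * B + h2 * h2 * C) * (p1 ^ 2 + p2 ^ 2) ^ 2 =
     (h1 * p2 - h2 * p1) ^ 2 * ((- p2) * (- p2) * A + (- p2) * p1 * B + p1 * p1 * C).
Proof.
  intros Hq Hp Hnz h1 h2.
  assert (L1 : 2 * A * p1 + B * p2 = 0).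
  { apply (quad_lin A). intros t. specialize (Hq (p1 + t) p2). nra. }
  assert (L2 : B * p1 + 2 * C * p2 = 0).
  { apply (quad_lin C). intros t. specialize (Hq p1 (p2 + t)). nra. }
  destruct (Req_dec p2 0) as [E2|E2].
  - subst p2. assert (p1 <> 0) by (intro; subst; auto).
    assert (A = 0) by (apply (Rmult_eq_reg_r (2 * p1)); [lra| lra]).
    assert (B = 0) by (apply (Rmult_eq_reg_r p1); [lra| lra]).
    subst. ring.
  - assert (HB : B = - 2 * A * p1 / p2) by (field_simplify_eq; [lra|auto]).
    assert (HC : C = A * p1 ^ 2 / p2 ^ 2).
    { rewrite HB in L2.
      assert (E : (- 2 * A * p1 / p2 * p1 + 2 * C * p2) * p2 = 2 * (C * p2 ^ 2 - A * p1 ^ 2)) by (field; auto).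
      rewrite L2 in E. assert (C * p2 ^ 2 = A * p1 ^ 2) by lra.
      apply (Rmult_eq_reg_r (p2 ^ 2)); [|apply pow_nonzero; auto].
      rewrite H. field. auto. }
    rewrite HB, HC. field. auto.
Qed.

Lemma S_pos (p1 p2 : R) : (p1, p2) <> (0,0) -> 0 < p1 ^ 2 + p2 ^ 2.
Proof.
  intros Hp. destruct (Req_dec p1 0); [destruct (Req_dec p2 0)|].
  - subst; exfalso; auto.
  - nra.
  - nra.
Qed.

Lemma hess_nonneg N : C2_strictly_convex_norm N -> forall p h, p <> (0,0) -> 0 <= hess_quad N p h.
Proof.
  intros HN [p1 p2] [h1 h2] Hp.
  destruct (Req_dec (h1 * p2 - h2 * p1) 0) as [E|E].
  - assert (Hpp := hess_pp N HN (p1, p2) Hp).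
    unfold hess_quad in *; simpl in *.
    destruct (Req_dec p1 0) as [E1|E1].
    + subst p1. assert (p2 <> 0) by (intro; subst; auto).
      assert (h1 = 0) by (apply (Rmult_eq_reg_r p2); lra).
      subst h1. set (l := h2 / p2). replace h2 with (l * p2) by (unfold l; field; auto).
      replace (0 * 0 * D1 (D1 N) (0, p2) + 0 * (l * p2) * (D2 (D1 N) (0, p2) + D1 (D2 N) (0, p2)) +
       l * p2 * (l * p2) * D2 (D2 N) (0, p2)) with (l * l * (0 * 0 * D1 (D1 N) (0, p2) + 0 * p2 * (D2 (D1 N) (0, p2) + D1 (D2 N) (0, p2)) +
       p2 * p2 * D2 (D2 N) (0, p2))) by ring.
      rewrite Hpp. lra.
    + set (l := h1 / p1).
      assert (h2 = l * p2) by (unfold l; field_simplify_eq; auto; lra).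
      assert (h1 = l * p1) by (unfold l; field; auto).
      rewrite H, H0.
      set (a := D1 (D1 N) (p1, p2)) in *. set (b := D2 (D1 N) (p1, p2) + D1 (D2 N) (p1, p2)) in *.
      set (c := D2 (D2 N) (p1, p2)) in *.
      replace (l * p1 * (l * p1) * a + l * p1 * (l * p2) * b + l * p2 * (l * p2) * c)
        with (l * l * (p1 * p1 * a + p1 * p2 * b + p2 * p2 * c)) by ring.
      rewrite Hpp. lra.
  - destruct HN as [_ [_ HS]]. left. apply HS; auto.
Qed.

Lemma hess_struct N : C2_strictly_convex_norm N -> forall p h, p <> (0,0) ->
  hess_quad N p h = (fst h * snd p - snd h * fst p) ^ 2 * Gf N p.
Proof.
  intros HN [p1 p2] [h1 h2] Hp.
  assert (HS := S_pos p1 p2 Hp).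
  assert (E := psd2 (D1 (D1 N) (p1, p2)) (D2 (D1 N) (p1, p2) + D1 (D2 N) (p1, p2)) (D2 (D2 N) (p1, p2)) p1 p2
     (fun h1 h2 => hess_nonneg N HN (p1,p2) (h1,h2) Hp) (hess_pp N HN (p1,p2) Hp) Hp h1 h2).
  unfold Gf, Kf, hess_quad in *; cbn [fst snd] in *.
  apply (Rmult_eq_reg_r ((p1 ^ 2 + p2 ^ 2) ^ 2)); [|apply pow_nonzero; lra].
  rewrite E. field. lra.
Qed.

Lemma Gf_pos N : C2_strictly_convex_norm N -> forall p, p <> (0,0) -> 0 < Gf N p.
Proof.
  intros HN [p1 p2] Hp. unfold Gf, Kf. cbn [fst snd].
  assert (HS := S_pos p1 p2 Hp).
  apply Rdiv_lt_0_compat; [|apply pow_lt; lra].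
  destruct HN as [_ [_ HS']]. apply HS'; auto.
  unfold parallel; simpl. lra.
Qed.

Lemma Gf_cont N : C2_strictly_convex_norm N -> forall x y, (x, y) <> (0,0) ->
  continuity_2d_pt (fun u v => Gf N (u, v)) x y.
Proof.
  intros HN x y Hp.
  assert (Ca := cont2d_of_cont _ x y (cont1 N HN (D1 (D1 N)) (x,y) Hp ltac:(simpl; auto 10))).
  assert (Cb := cont2d_of_cont _ x y (cont1 N HN (D2 (D1 N)) (x,y) Hp ltac:(simpl; auto 10))).
  assert (Cc := cont2d_of_cont _ x y (cont1 N HN (D1 (D2 N)) (x,y) Hp ltac:(simpl; auto 10))).
  assert (Ce := cont2d_of_cont _ x y (cont1 N HN (D2 (D2 N)) (x,y) Hp ltac:(simpl; auto 10))).
  assert (C1 := continuity_2d_pt_id1 x y). assert (C2 := continuity_2d_pt_id2 x y).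
  apply continuity_2d_pt_ext with
    (fun u v => ((- v) * (- v) * D1 (D1 N) (u, v) + (- v) * u * (D2 (D1 N) (u, v) + D1 (D2 N) (u, v))
                 + u * u * D2 (D2 N) (u, v)) * / ((u * u + v * v) * (u * u + v * v))).
  { intros u v. unfold Gf, Kf, hess_quad; cbn [fst snd]. unfold Rdiv. f_equal. f_equal. ring. }
  apply continuity_2d_pt_mult.
  - apply continuity_2d_pt_plus; [apply continuity_2d_pt_plus|].
    + apply continuity_2d_pt_mult; [|exact Ca]. apply continuity_2d_pt_mult; apply continuity_2d_pt_opp; exact C2.
    + apply continuity_2d_pt_mult; [|apply continuity_2d_pt_plus; [exact Cb|exact Cc]].
      apply continuity_2d_pt_mult; [apply continuity_2d_pt_opp; exact C2| exact C1].
    + apply continuity_2d_pt_mult; [|exact Ce]. apply continuity_2d_pt_mult; exact C1.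
  - apply continuity_2d_pt_inv.
    + apply continuity_2d_pt_mult; apply continuity_2d_pt_plus; apply continuity_2d_pt_mult; auto.
    + assert (H := S_pos x y Hp). simpl in H. nra.
Qed.

Lemma cont2d_snd f x y : continuity_2d_pt f x y -> continuity_pt (fun t => f x t) y.
Proof.
  intros H. apply continuity_pt_locally. intros eps. destruct (H eps) as [d Hd].
  exists d. intros t Ht. apply Hd. replace (x - x) with 0 by ring. rewrite Rabs_R0. apply cond_pos.
  exact Ht.
Qed.

Lemma cont2d_fst f x y : continuity_2d_pt f x y -> continuity_pt (fun t => f t y) x.
Proof.
  intros H. apply continuity_pt_locally. intros eps. destruct (H eps) as [d Hd].
  exists d. intros t Ht. apply Hd. exact Ht. replace (y - y) with 0 by ring. rewrite Rabs_R0. apply cond_pos.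
Qed.

Lemma chart_N N : C2_strictly_convex_norm N -> forall (mk : R -> R -> pt),
  (forall l a b, mk (l * a) (l * b) = pscal l (mk a b)) ->
  (forall a b, a <> 0 -> mk a b <> (0,0)) ->
  (forall t, continuity_pt (fun t => Gf N (mk 1 t)) t) ->
  forall eta, 0 < eta -> exists del, 0 < del /\
    forall t a b, -1 <= t <= 1 -> Rabs (a - 1) <= del -> Rabs (b - t) <= del ->
      Rabs (Gf N (mk a b) - Gf N (mk 1 t)) <= eta * Gf N (mk 1 t).
Proof.
  intros HN mk Hs Hnz Hc eta Heta.
  apply (chart (fun a b => Gf N (mk a b))); auto.
  - intros l a b Hl Ha. rewrite Hs. apply (Gf_scal N HN); auto. apply Hnz; lra.
  - intros t _. apply (Gf_pos N HN). apply Hnz; lra.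
Qed.

Lemma fin3 A B l eta : 0 < l -> Rabs (A - B) <= eta * B -> Rabs (A / l ^ 3 - B / l ^ 3) <= eta * (B / l ^ 3).
Proof.
  intros Hl H. assert (0 < / l ^ 3) by (apply Rinv_0_lt_compat; apply pow_lt; lra).
  replace (A / l ^ 3 - B / l ^ 3) with ((A - B) * / l ^ 3) by (unfold Rdiv; ring).
  rewrite Rabs_mult, (Rabs_right (/ l ^ 3)) by lra. unfold Rdiv.
  rewrite <- Rmult_assoc. apply Rmult_le_compat_r; lra.
Qed.

Lemma unif_case N : C2_strictly_convex_norm N -> forall (mk : R -> R -> pt),
  (forall l a b, mk (l * a) (l * b) = pscal l (mk a b)) ->
  (forall a b, a <> 0 -> mk a b <> (0,0)) ->
  forall del eta, del <= 1/2 ->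
  (forall t a b, -1 <= t <= 1 -> Rabs (a - 1) <= del -> Rabs (b - t) <= del ->
      Rabs (Gf N (mk a b) - Gf N (mk 1 t)) <= eta * Gf N (mk 1 t)) ->
  forall l t v1 v2, 0 < l -> -1 <= t <= 1 -> Rabs v1 <= l * del -> Rabs v2 <= l * del ->
  Rabs (Gf N (mk (l + v1) (l * t + v2)) - Gf N (mk l (l * t))) <= eta * Gf N (mk l (l * t)).
Proof.
  intros HN mk Hs Hnz del eta Hdel Hch l t v1 v2 Hl Ht H1 H2.
  set (a := (l + v1) / l). set (b := (l * t + v2) / l).
  replace (mk (l + v1) (l * t + v2)) with (pscal l (mk a b)) by (rewrite <- Hs; f_equal; unfold a, b; field; lra).
  replace (mk l (l * t)) with (pscal l (mk 1 t)) by (rewrite <- Hs; f_equal; ring).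
  assert (Ha : Rabs (a - 1) <= del).
  { replace (a - 1) with (v1 / l) by (unfold a; field; lra). rewrite Rabs_div, (Rabs_right l) by lra.
    apply Rmult_le_reg_r with l; [lra|]. unfold Rdiv. rewrite Rmult_assoc, Rinv_l by lra. lra. }
  assert (Hb : Rabs (b - t) <= del).
  { replace (b - t) with (v2 / l) by (unfold b; field; lra). rewrite Rabs_div, (Rabs_right l) by lra.
    apply Rmult_le_reg_r with l; [lra|]. unfold Rdiv. rewrite Rmult_assoc, Rinv_l by lra. lra. }
  assert (Hapos : a <> 0) by (apply Rabs_le_between in Ha; lra).
  rewrite (Gf_scal N HN l (mk a b) Hl (Hnz a b Hapos)).
  rewrite (Gf_scal N HN l (mk 1 t) Hl (Hnz 1 t ltac:(lra))).
  apply fin3; auto.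
Qed.

Definition mk1 (a b : R) : pt := (a, b).
Definition mk2 (a b : R) : pt := (- a, b).
Definition mk3 (a b : R) : pt := (b, a).
Definition mk4 (a b : R) : pt := (b, - a).

Lemma get_chart N : C2_strictly_convex_norm N -> forall mk : R -> R -> pt,
  (forall l a b, mk (l * a) (l * b) = pscal l (mk a b)) ->
  (forall a b, a <> 0 -> mk a b <> (0,0)) ->
  (forall t, continuity_pt (fun t => Gf N (mk 1 t)) t) ->
  forall eta, 0 < eta -> exists del, 0 < del /\ del <= 1/2 /\
  forall l t v1 v2, 0 < l -> -1 <= t <= 1 -> Rabs v1 <= l * del -> Rabs v2 <= l * del ->
  Rabs (Gf N (mk (l + v1) (l * t + v2)) - Gf N (mk l (l * t))) <= eta * Gf N (mk l (l * t)).
Proof.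
  intros HN mk Hs Hnz Hc eta Heta.
  destruct (chart_N N HN mk Hs Hnz Hc eta Heta) as [d [Hd Hch]].
  exists (Rmin d (1/2)). split; [apply Rmin_glb_lt; lra|]. split; [apply Rmin_r|].
  intros l t v1 v2 Hl Ht H1 H2.
  apply (unif_case N HN mk Hs Hnz (Rmin d (1/2)) eta (Rmin_r _ _)); auto.
  intros t' a b Ht' Ha Hb. apply Hch; auto; eapply Rle_trans; eauto; apply Rmin_l.
Qed.

Lemma ratio_le x l : 0 < l -> Rabs x <= l -> -1 <= x / l <= 1.
Proof.
  intros Hl H. apply Rabs_le_between in H. assert (x / l * l = x) by (field; lra).
  split; nra.
Qed.

Lemma unif N : C2_strictly_convex_norm N -> forall eta Dm, 0 < eta -> 0 < Dm ->
  exists R1, 0 < R1 /\ forall w1 w2 v1 v2, R1 <= Rmax (Rabs w1) (Rabs w2) ->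
    Rabs v1 <= Dm -> Rabs v2 <= Dm ->
    Rabs (Gf N (w1 + v1, w2 + v2) - Gf N (w1, w2)) <= eta * Gf N (w1, w2).
Proof.
  intros HN eta Dm Heta HDm.
  assert (Cg := Gf_cont N HN).
  assert (S1 : forall l a b, mk1 (l * a) (l * b) = pscal l (mk1 a b)).
  { intros; unfold mk1, pscal; simpl; reflexivity. }
  assert (Z1 : forall a b, a <> 0 -> mk1 a b <> (0,0)).
  { intros a b H; unfold mk1; now apply nz_fst. }
  assert (K1 : forall t, continuity_pt (fun t => Gf N (mk1 1 t)) t).
  { intros t. apply (cont2d_snd (fun u v => Gf N (u, v)) 1 t). apply Cg. apply nz_fst; lra. }
  destruct (get_chart N HN mk1 S1 Z1 K1 eta Heta) as [d1 [Hd1 [Hd1' C1]]].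
  assert (S2 : forall l a b, mk2 (l * a) (l * b) = pscal l (mk2 a b)).
  { intros; unfold mk2, pscal; simpl; apply pair_eq; ring. }
  assert (Z2 : forall a b, a <> 0 -> mk2 a b <> (0,0)).
  { intros a b H; unfold mk2; apply nz_fst; lra. }
  assert (K2 : forall t, continuity_pt (fun t => Gf N (mk2 1 t)) t).
  { intros t. apply (cont2d_snd (fun u v => Gf N (u, v)) (- 1) t). apply Cg. apply nz_fst; lra. }
  destruct (get_chart N HN mk2 S2 Z2 K2 eta Heta) as [d2 [Hd2 [Hd2' C2]]].
  assert (S3 : forall l a b, mk3 (l * a) (l * b) = pscal l (mk3 a b)).
  { intros; unfold mk3, pscal; simpl; reflexivity. }
  assert (Z3 : forall a b, a <> 0 -> mk3 a b <> (0,0)).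
  { intros a b H; unfold mk3; now apply nz_snd. }
  assert (K3 : forall t, continuity_pt (fun t => Gf N (mk3 1 t)) t).
  { intros t. apply (cont2d_fst (fun u v => Gf N (u, v)) t 1). apply Cg. apply nz_snd; lra. }
  destruct (get_chart N HN mk3 S3 Z3 K3 eta Heta) as [d3 [Hd3 [Hd3' C3]]].
  assert (S4 : forall l a b, mk4 (l * a) (l * b) = pscal l (mk4 a b)).
  { intros; unfold mk4, pscal; simpl; apply pair_eq; ring. }
  assert (Z4 : forall a b, a <> 0 -> mk4 a b <> (0,0)).
  { intros a b H; unfold mk4; apply nz_snd; lra. }
  assert (K4 : forall t, continuity_pt (fun t => Gf N (mk4 1 t)) t).
  { intros t. apply (cont2d_fst (fun u v => Gf N (u, v)) t (- 1)). apply Cg. apply nz_snd; lra. }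
  destruct (get_chart N HN mk4 S4 Z4 K4 eta Heta) as [d4 [Hd4 [Hd4' C4]]].
  set (d := Rmin (Rmin d1 d2) (Rmin d3 d4)).
  assert (Hd : 0 < d) by (unfold d; repeat apply Rmin_glb_lt; lra).
  assert (Hdd : d <= d1 /\ d <= d2 /\ d <= d3 /\ d <= d4).
  { unfold d. repeat split.
    - eapply Rle_trans; [apply Rmin_l|apply Rmin_l].
    - eapply Rle_trans; [apply Rmin_l|apply Rmin_r].
    - eapply Rle_trans; [apply Rmin_r|apply Rmin_l].
    - eapply Rle_trans; [apply Rmin_r|apply Rmin_r]. }
  exists (Dm / d + 1). split; [assert (0 < Dm / d) by (apply Rdiv_lt_0_compat; lra); lra|].
  intros w1 w2 v1 v2 HR Hv1 Hv2.
  assert (Hl : forall l dd, Dm / d + 1 <= l -> d <= dd -> forall v, Rabs v <= Dm -> Rabs v <= l * dd).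
  { intros l dd Hl' Hdd' v Hv. assert (Dm <= l * d).
    { assert (Dm / d * d = Dm) by (field; lra). nra. }
    nra. }
  destruct Hdd as [Hdd1 [Hdd2 [Hdd3 Hdd4]]].
  assert (HDd : 0 < Dm / d) by (apply Rdiv_lt_0_compat; lra).
  unfold Rmax in HR. destruct (Rle_dec (Rabs w1) (Rabs w2)) as [r|r].
  - destruct (Rcase_abs w2) as [Hn|Hp].
    + rewrite (Rabs_left w2) in HR, r by lra.
      assert (Ht := ratio_le w1 (- w2) ltac:(lra) r).
      assert (E1 : (w1 + v1, w2 + v2) = mk4 (- w2 + - v2) (- w2 * (w1 / - w2) + v1)) by (unfold mk4; apply pair_eq; field; lra).
      assert (E2 : (w1, w2) = mk4 (- w2) (- w2 * (w1 / - w2))) by (unfold mk4; apply pair_eq; field; lra).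
      rewrite E1, E2. apply C4; [lra | exact Ht | rewrite Rabs_Ropp; apply (Hl _ d4); auto; lra | apply (Hl _ d4); auto; lra].
    + rewrite (Rabs_right w2) in HR, r by lra.
      assert (Ht := ratio_le w1 w2 ltac:(lra) r).
      assert (E1 : (w1 + v1, w2 + v2) = mk3 (w2 + v2) (w2 * (w1 / w2) + v1)) by (unfold mk3; apply pair_eq; field; lra).
      assert (E2 : (w1, w2) = mk3 w2 (w2 * (w1 / w2))) by (unfold mk3; apply pair_eq; field; lra).
      rewrite E1, E2. apply C3; [lra | exact Ht | apply (Hl _ d3); auto; lra | apply (Hl _ d3); auto; lra].
  - apply Rnot_le_lt in r.
    destruct (Rcase_abs w1) as [Hn|Hp].
    + rewrite (Rabs_left w1) in HR, r by lra.
      assert (Ht := ratio_le w2 (- w1) ltac:(lra) ltac:(lra)).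
      assert (E1 : (w1 + v1, w2 + v2) = mk2 (- w1 + - v1) (- w1 * (w2 / - w1) + v2)) by (unfold mk2; apply pair_eq; field; lra).
      assert (E2 : (w1, w2) = mk2 (- w1) (- w1 * (w2 / - w1))) by (unfold mk2; apply pair_eq; field; lra).
      rewrite E1, E2. apply C2; [lra | exact Ht | rewrite Rabs_Ropp; apply (Hl _ d2); auto; lra | apply (Hl _ d2); auto; lra].
    + rewrite (Rabs_right w1) in HR, r by lra.
      assert (Ht := ratio_le w2 w1 ltac:(lra) ltac:(lra)).
      assert (E1 : (w1 + v1, w2 + v2) = mk1 (w1 + v1) (w1 * (w2 / w1) + v2)) by (unfold mk1; apply pair_eq; field; lra).
      assert (E2 : (w1, w2) = mk1 w1 (w1 * (w2 / w1))) by (unfold mk1; apply pair_eq; field; lra).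
      rewrite E1, E2. apply C1; [lra | exact Ht | apply (Hl _ d1); auto; lra | apply (Hl _ d1); auto; lra].
Qed.


Lemma N_nonneg N : C2_strictly_convex_norm N -> forall x, 0 <= N x.
Proof. intros [[H _] _]. exact H. Qed.

Lemma ratio_abs x y : y <> 0 -> Rabs x <= Rabs y -> -1 <= x / y <= 1.
Proof.
  intros Hy H. apply Rabs_le_between. rewrite Rabs_div by auto.
  assert (0 < Rabs y) by (apply Rabs_pos_lt; auto).
  apply Rmult_le_reg_r with (Rabs y); [lra|]. unfold Rdiv. rewrite Rmult_assoc, Rinv_l by lra. lra.
Qed.

Lemma N_lower N : C2_strictly_convex_norm N -> exists m, 0 < m /\
  forall x1 x2, m * Rmax (Rabs x1) (Rabs x2) <= N (x1, x2).
Proof.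
  intros HN.
  assert (Cn : forall x y, (x,y) <> (0,0) -> continuity_2d_pt (fun u v => N (u,v)) x y).
  { intros x y H. apply cont2d_of_cont. apply (cont1 N HN N (x,y) H). simpl; auto. }
  destruct (continuity_ab_min (fun t => N (1, t)) (-1) 1 ltac:(lra)) as [t1 [Ht1 Ht1i]].
  { intros c _. apply (cont2d_snd (fun u v => N (u,v)) 1 c). apply Cn. apply nz_fst; lra. }
  destruct (continuity_ab_min (fun t => N (t, 1)) (-1) 1 ltac:(lra)) as [t2 [Ht2 Ht2i]].
  { intros c _. apply (cont2d_fst (fun u v => N (u,v)) c 1). apply Cn. apply nz_snd; lra. }
  assert (Hm1 : 0 < N (1, t1)) by (apply (N_pos N HN); apply nz_fst; lra).
  assert (Hm2 : 0 < N (t2, 1)) by (apply (N_pos N HN); apply nz_snd; lra).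
  exists (Rmin (N (1, t1)) (N (t2, 1))). split; [apply Rmin_glb_lt; lra|].
  intros x1 x2.
  assert (Hmin1 := Rmin_l (N (1, t1)) (N (t2, 1))). assert (Hmin2 := Rmin_r (N (1, t1)) (N (t2, 1))).
  assert (Hmp : 0 < Rmin (N (1, t1)) (N (t2, 1))) by (apply Rmin_glb_lt; lra).
  unfold Rmax. destruct (Rle_dec (Rabs x1) (Rabs x2)) as [r|r].
  - destruct (Req_dec x2 0) as [E|E].
    + subst. assert (Rabs x1 <= 0) by (rewrite Rabs_R0 in r; lra).
      rewrite Rabs_R0. rewrite Rmult_0_r. apply (N_nonneg N HN).
    + replace (x1, x2) with (pscal x2 (x1 / x2, 1)) by (unfold pscal; simpl; apply pair_eq; field; auto).
      rewrite (N_scal N HN).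
      assert (N (t2, 1) <= N (x1 / x2, 1)) by (apply Ht2; apply ratio_abs; auto).
      assert (0 <= Rabs x2) by apply Rabs_pos. nra.
  - apply Rnot_le_lt in r.
    assert (E : x1 <> 0) by (intro; subst; rewrite Rabs_R0 in r; assert (0 <= Rabs x2) by apply Rabs_pos; lra).
    replace (x1, x2) with (pscal x1 (1, x2 / x1)) by (unfold pscal; simpl; apply pair_eq; field; auto).
    rewrite (N_scal N HN).
    assert (N (1, t1) <= N (1, x2 / x1)) by (apply Ht1; apply ratio_abs; auto; lra).
    assert (0 <= Rabs x1) by apply Rabs_pos. nra.
Qed.

Lemma abs_pm l : Rabs (l + 1) = Rabs (l - 1) -> l = 0.
Proof. unfold Rabs; repeat destruct Rcase_abs; lra. Qed.

Lemma cross_nz N : C2_strictly_convex_norm N -> forall w1 w2 d1 d2,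
  (d1, d2) <> (0,0) -> (w1, w2) <> (0,0) ->
  N (w1 + d1, w2 + d2) = N (w1 - d1, w2 - d2) -> d1 * w2 - d2 * w1 <> 0.
Proof.
  intros HN w1 w2 d1 d2 Hd Hw HE E.
  assert (Nd := N_pos N HN _ Hd).
  destruct (Req_dec d1 0) as [E1|E1].
  - assert (d2 <> 0) by (intro; subst; auto).
    set (l := w2 / d2).
    assert (Hw1 : w1 = l * d1) by (unfold l; subst d1; apply (Rmult_eq_reg_r d2); [|auto]; field_simplify; auto; lra).
    assert (Hw2 : w2 = l * d2) by (unfold l; field; auto).
    rewrite Hw1, Hw2 in HE.
    replace (l * d1 + d1, l * d2 + d2) with (pscal (l + 1) (d1, d2)) in HE by (unfold pscal; simpl; apply pair_eq; ring).
    replace (l * d1 - d1, l * d2 - d2) with (pscal (l - 1) (d1, d2)) in HE by (unfold pscal; simpl; apply pair_eq; ring).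
    rewrite !(N_scal N HN) in HE.
    assert (Rabs (l + 1) = Rabs (l - 1)) by (apply (Rmult_eq_reg_r (N (d1, d2))); lra).
    apply abs_pm in H0. apply Hw. rewrite Hw1, Hw2, H0. apply pair_eq; ring.
  - set (l := w1 / d1).
    assert (Hw1 : w1 = l * d1) by (unfold l; field; auto).
    assert (Hw2 : w2 = l * d2) by (unfold l; apply (Rmult_eq_reg_r d1); [|auto]; field_simplify; auto; lra).
    rewrite Hw1, Hw2 in HE.
    replace (l * d1 + d1, l * d2 + d2) with (pscal (l + 1) (d1, d2)) in HE by (unfold pscal; simpl; apply pair_eq; ring).
    replace (l * d1 - d1, l * d2 - d2) with (pscal (l - 1) (d1, d2)) in HE by (unfold pscal; simpl; apply pair_eq; ring).
    rewrite !(N_scal N HN) in HE.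
    assert (Rabs (l + 1) = Rabs (l - 1)) by (apply (Rmult_eq_reg_r (N (d1, d2))); lra).
    apply abs_pm in H. apply Hw. rewrite Hw1, Hw2, H. apply pair_eq; ring.
Qed.

Lemma sqrt_le_sum x y : sqrt (x ^ 2 + y ^ 2) <= Rabs x + Rabs y.
Proof.
  rewrite <- (sqrt_pow2 (Rabs x + Rabs y)) by (assert (0 <= Rabs x) by apply Rabs_pos; assert (0 <= Rabs y) by apply Rabs_pos; lra).
  apply sqrt_le_1_alt.
  assert (x ^ 2 = Rabs x ^ 2) by (rewrite <- Rabs_pow2 || idtac; unfold Rabs; destruct Rcase_abs; ring).
  assert (y ^ 2 = Rabs y ^ 2) by (unfold Rabs; destruct Rcase_abs; ring).
  assert (0 <= Rabs x) by apply Rabs_pos; assert (0 <= Rabs y) by apply Rabs_pos. nra.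
Qed.

Lemma line_nz w1 w2 d1 d2 s Dm : Dm < Rmax (Rabs w1) (Rabs w2) -> Rabs d1 <= Dm -> Rabs d2 <= Dm ->
  -1 <= s <= 1 -> (w1 + s * d1, w2 + s * d2) <> (0,0).
Proof.
  intros H H1 H2 Hs E. inversion E.
  assert (Rabs (s * d1) <= Dm) by (rewrite Rabs_mult; assert (Rabs s <= 1) by (apply Rabs_le; lra);
    assert (0 <= Rabs d1) by apply Rabs_pos; nra).
  assert (Rabs (s * d2) <= Dm) by (rewrite Rabs_mult; assert (Rabs s <= 1) by (apply Rabs_le; lra);
    assert (0 <= Rabs d2) by apply Rabs_pos; nra).
  replace w1 with (- (s * d1)) in H by lra. replace w2 with (- (s * d2)) in H by lra.
  rewrite !Rabs_Ropp in H. unfold Rmax in H. destruct Rle_dec; lra.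
Qed.

Lemma sd_bound s d Dm : -1 <= s <= 1 -> Rabs d <= Dm -> Rabs (s * d) <= Dm.
Proof.
  intros Hs Hd. rewrite Rabs_mult. assert (Rabs s <= 1) by (apply Rabs_le; lra).
  assert (0 <= Rabs d) by apply Rabs_pos. assert (0 <= Rabs s) by apply Rabs_pos. nra.
Qed.

Theorem proposition2p1 (N : pt -> R) :
  C2_strictly_convex_norm N ->
  forall eps : R, eps > 0 ->
  exists R0 : R, R0 > 0 /\
    forall a b : pt, a <> b -> N (psub b a) = 1 ->
      forall z : pt, Mab N a b z -> ~ eball a R0 z ->
        Rbar_le (dist_set z (Lab N a b)) eps.
Proof.
  intros HN eps Heps.
  destruct (N_lower N HN) as [m [Hm Hlow]].
  set (Dm := 1 / (2 * m)).
  assert (HDm : 0 < Dm) by (unfold Dm; apply Rdiv_lt_0_compat; lra).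
  set (eta := Rmin (1/2) (eps / (2 * Dm + 1))).
  assert (Heta0 : 0 < eta) by (unfold eta; apply Rmin_glb_lt; [lra| apply Rdiv_lt_0_compat; lra]).
  assert (Heta1 : eta <= 1/2) by apply Rmin_l.
  assert (Heta2 : eta <= eps / (2 * Dm + 1)) by apply Rmin_r.
  destruct (unif N HN (eta / 3) Dm ltac:(lra) HDm) as [R1 [HR1 HU]].
  set (W := R1 + Dm + 1).
  exists (2 * (W + Dm)). split; [unfold W; lra|].
  intros [a1 a2] [b1 b2] Hab Hn [z1 z2] HM Hball.
  unfold psub in Hn; simpl in Hn.
  set (d1 := (b1 - a1) / 2). set (d2 := (b2 - a2) / 2).
  set (w1 := z1 - (a1 + b1) / 2). set (w2 := z2 - (a2 + b2) / 2).
  assert (Hlb := Hlow (b1 - a1) (b2 - a2)). rewrite Hn in Hlb.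
  assert (Hmax : Rmax (Rabs (b1 - a1)) (Rabs (b2 - a2)) <= 1 / m).
  { apply Rmult_le_reg_l with m; [lra|]. replace (m * (1 / m)) with 1 by (field; lra). exact Hlb. }
  assert (Hd1 : Rabs d1 <= Dm).
  { unfold d1, Dm. rewrite Rabs_div by lra. rewrite (Rabs_right 2) by lra.
    assert (Rabs (b1 - a1) <= 1 / m) by (eapply Rle_trans; [apply Rmax_l|exact Hmax]).
    replace (1 / (2 * m)) with ((1 / m) / 2) by (field; lra). unfold Rdiv; lra. }
  assert (Hd2 : Rabs d2 <= Dm).
  { unfold d2, Dm. rewrite Rabs_div by lra. rewrite (Rabs_right 2) by lra.
    assert (Rabs (b2 - a2) <= 1 / m) by (eapply Rle_trans; [apply Rmax_r|exact Hmax]).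
    replace (1 / (2 * m)) with ((1 / m) / 2) by (field; lra). unfold Rdiv; lra. }
  assert (Hw : W <= Rmax (Rabs w1) (Rabs w2)).
  { unfold eball, edist in Hball; cbn [fst snd] in Hball. apply Rnot_lt_le in Hball.
    assert (Hs := sqrt_le_sum (a1 - z1) (a2 - z2)).
    replace w1 with (- (a1 - z1) - d1) by (unfold w1, d1; field).
    replace w2 with (- (a2 - z2) - d2) by (unfold w2, d2; field).
    assert (Rabs (a1 - z1) - Rabs d1 <= Rabs (- (a1 - z1) - d1)).
    { rewrite <- (Rabs_Ropp (a1 - z1)). apply Rabs_triang_inv. }
    assert (Rabs (a2 - z2) - Rabs d2 <= Rabs (- (a2 - z2) - d2)).
    { rewrite <- (Rabs_Ropp (a2 - z2)). apply Rabs_triang_inv. }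
    assert (Rabs (- (a1 - z1) - d1) <= Rmax (Rabs (- (a1 - z1) - d1)) (Rabs (- (a2 - z2) - d2))) by apply Rmax_l.
    assert (Rabs (- (a2 - z2) - d2) <= Rmax (Rabs (- (a1 - z1) - d1)) (Rabs (- (a2 - z2) - d2))) by apply Rmax_r.
    lra. }
  assert (HwD : Dm < Rmax (Rabs w1) (Rabs w2)) by (unfold W in Hw; lra).
  assert (Hnz : forall s, -1 <= s <= 1 -> (w1 + s * d1, w2 + s * d2) <> (0,0)).
  { intros s Hs. apply (line_nz w1 w2 d1 d2 s Dm); auto. }
  set (phi := fun s => N (w1 + s * d1, w2 + s * d2)).
  set (df := fun s => D1 N (w1 + s * d1, w2 + s * d2) * d1 + D2 N (w1 + s * d1, w2 + s * d2) * d2).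
  set (ddf := fun s => hess_quad N (w1 + s * d1, w2 + s * d2) (d1, d2)).
  assert (Hp1 : forall s, -1 <= s <= 1 -> is_derive phi s (df s)).
  { intros s Hs. apply (phi_d1 N HN). auto. }
  assert (Hp2 : forall s, -1 <= s <= 1 -> is_derive df s (ddf s)).
  { intros s Hs. apply (phi_d2 N HN). auto. }
  assert (Hsym : phi 1 = phi (-1)).
  { unfold phi. unfold Mab, psub in HM; simpl in HM.
    replace (w1 + 1 * d1, w2 + 1 * d2) with (- (a1 - z1), - (a2 - z2)) by (unfold w1, d1, w2, d2; apply pair_eq; field).
    replace (w1 + -1 * d1, w2 + -1 * d2) with (- (b1 - z1), - (b2 - z2)) by (unfold w1, d1, w2, d2; apply pair_eq; field).
    rewrite !(N_opp N HN). exact HM. }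
  destruct (MVT_gen phi (-1) 1 df) as [s0 [Hs0 Hmvt]].
  { intros s Hs; cbv zeta in Hs. rewrite Rmin_left, Rmax_right in Hs by lra. apply Hp1; lra. }
  { intros s Hs; cbv zeta in Hs. rewrite Rmin_left, Rmax_right in Hs by lra. apply cont_of_ex. eexists. apply Hp1; lra. }
  cbv zeta in Hs0. rewrite Rmin_left, Rmax_right in Hs0 by lra.
  assert (Hdf0 : df s0 = 0) by (rewrite Hsym in Hmvt; lra).
  set (cr := d1 * w2 - d2 * w1).
  assert (Hdd : forall s, -1 <= s <= 1 -> ddf s = cr ^ 2 * Gf N (w1 + s * d1, w2 + s * d2)).
  { intros s Hs. unfold ddf. rewrite (hess_struct N HN _ _ (Hnz s Hs)). cbn [fst snd]. f_equal. unfold cr. ring. }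
  assert (Hcr : cr <> 0).
  { unfold cr. apply (cross_nz N HN).
    - intro E. inversion E. apply Hab. unfold d1, d2 in *. apply pair_eq; lra.
    - intro E. injection E; intros E2 E1. rewrite E1, E2 in HwD. rewrite Rabs_R0 in HwD. unfold Rmax in HwD; destruct Rle_dec; lra.
    - assert (H := Hsym). unfold phi in H. cbv beta in H.
      replace (w1 + 1 * d1, w2 + 1 * d2) with (w1 + d1, w2 + d2) in H by (apply pair_eq; ring).
      replace (w1 + -1 * d1, w2 + -1 * d2) with (w1 - d1, w2 - d2) in H by (apply pair_eq; ring).
      exact H. }
  assert (Hc : 0 < cr ^ 2) by (rewrite <- Rsqr_pow2; apply Rsqr_pos_lt; exact Hcr).
  assert (HG : forall s, -1 <= s <= 1 -> Rabs (Gf N (w1 + s * d1, w2 + s * d2) - Gf N (w1, w2)) <= eta / 3 * Gf N (w1, w2)).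
  { intros s Hs. apply HU; [unfold W in Hw; lra| apply sd_bound; auto | apply sd_bound; auto]. }
  assert (HG0 : 0 < Gf N (w1, w2)).
  { apply (Gf_pos N HN). intro E. injection E; intros E2 E1. rewrite E1, E2 in HwD. rewrite Rabs_R0 in HwD. unfold Rmax in HwD; destruct Rle_dec; lra. }
  set (k := cr ^ 2 * Gf N (w1 + s0 * d1, w2 + s0 * d2)).
  assert (Hk : 0 < k) by (unfold k; apply Rmult_lt_0_compat; [lra| apply (Gf_pos N HN); auto]).
  assert (Hs0eta : Rabs s0 <= eta).
  { apply (key1d phi df ddf s0 k eta); auto; try lra.
    intros s Hs. rewrite (Hdd s Hs). unfold k.
    assert (A := HG s Hs). assert (B := HG s0 Hs0).
    apply Rabs_le_between in A. apply Rabs_le_between in B.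
    set (G0 := Gf N (w1, w2)) in *.
    set (Gs := Gf N (w1 + s * d1, w2 + s * d2)) in *.
    set (Gc := Gf N (w1 + s0 * d1, w2 + s0 * d2)) in *.
    assert (Gc * (1 - eta) <= Gs) by nra.
    assert (Gs <= Gc * (1 + eta)) by nra.
    split; nra. }
  set (q1 := w1 + s0 * d1). set (q2 := w2 + s0 * d2).
  assert (Hq : (q1, q2) <> (0,0)) by (apply Hnz; auto).
  set (T := N (q1, q2)).
  assert (HT : 0 < T) by (apply (N_pos N HN); auto).
  set (y := pscal (/ T) (q1, q2)).
  set (P := padd (pscal (/ 2) (padd (a1, a2) (b1, b2))) (pscal T y)).
  assert (HL : Lab N (a1, a2) (b1, b2) P).
  { unfold Lab, Ldir. exists y, T. split.
    - unfold tangent_directed_by. unfold psub; simpl. rewrite Hn, Rinv_1. split.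
      + unfold y. rewrite (N_scal N HN). rewrite Rabs_right by (left; apply Rinv_0_lt_compat; lra).
        fold T. field. lra.
      + unfold y. rewrite (HD1 N HN), (HD2 N HN) by (apply Rinv_0_lt_compat; lra).
        assert (df s0 = 0) by exact Hdf0. unfold df in H. fold q1 q2 in H.
        replace (b1 - a1) with (2 * d1) by (unfold d1; field).
        replace (b2 - a2) with (2 * d2) by (unfold d2; field).
        lra.
    - unfold P, padd, psub, pscal; simpl. apply pair_eq; ring. }
  assert (Hdist : edist (z1, z2) P <= eps).
  { unfold edist, P, y, padd, pscal; simpl.
    replace (z1 - (/ 2 * (a1 + b1) + T * (/ T * q1))) with (- s0 * d1) by (unfold q1, w1; field; lra).
    replace (z2 - (/ 2 * (a2 + b2) + T * (/ T * q2))) with (- s0 * d2) by (unfold q2, w2; field; lra).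
    rewrite <- (sqrt_pow2 eps) by lra. apply sqrt_le_1_alt.
    apply Rabs_le_between in Hd1. apply Rabs_le_between in Hd2. apply Rabs_le_between in Hs0eta.
    assert (E : eta * (2 * Dm + 1) <= eps).
    { replace eps with (eps / (2 * Dm + 1) * (2 * Dm + 1)) by (field; lra).
      apply Rmult_le_compat_r; lra. }
    assert (s0 ^ 2 <= eta ^ 2) by nra.
    assert (d1 ^ 2 <= Dm ^ 2) by nra. assert (d2 ^ 2 <= Dm ^ 2) by nra.
    assert (s0 ^ 2 * (d1 ^ 2 + d2 ^ 2) <= eta ^ 2 * (2 * Dm ^ 2)).
    { apply Rmult_le_compat; nra. }
    assert (eta ^ 2 * (2 * Dm ^ 2) <= (eta * (2 * Dm + 1)) ^ 2) by nra.
    assert ((eta * (2 * Dm + 1)) ^ 2 <= eps ^ 2) by (apply pow_incr; nra).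
    nra. }
  unfold dist_set. destruct (Glb_Rbar_correct (fun r => exists p, Lab N (a1, a2) (b1, b2) p /\ r = edist (z1, z2) p)) as [Hglb _].
  apply Rbar_le_trans with (edist (z1, z2) P).
  - apply Hglb. exists P. split; auto.
  - simpl. exact Hdist.
Qed.
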